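(* Let $G$ be a $2$-connected graph and $K$ a connected subgraph of $G$ with at least three vertices. Then $G_K$ is $2$-connected.
   Context: Graphs are simple. For a connected graph $G$ and a subgraph $K$, $G_K$ denotes the minor of $G$ obtained by contracting, for each component of $G-K$ (the graph obtained by deleting the vertices of $K$), all edges of that component to a single vertex, and then deleting all multiple edges. *)

(* Defs.v *)
From mathcomp Require Import all_boot.
Set Implicit Arguments. Unset Strict Implicit. Unset Printing Implicit Defensive.

(* A (simple) graph is given by a vertex set V : {set U} inside a finType U
   together with an adjacency relation E : rel U (only its restriction to V
   matters). *)

Definition restr (U : finType) (V : {set U}) (E : rel U) : rel U :=
  fun x y => [&& x \in V, y \in V & E x y].

(* the graph (V, E) is connected (nonempty not required; every two vertices
   are joined by a path inside V) *)
Definition gconnected (U : finType) (V : {set U}) (E : rel U) : Prop :=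
  forall x y, x \in V -> y \in V -> connect (restr V E) x y.

(* 2-connected (Diestel): more than 2 vertices, and G - X connected for
   every set X of fewer than 2 vertices *)
Definition two_connected (U : finType) (V : {set U}) (E : rel U) : Prop :=
  2 < #|V| /\ gconnected V E /\ (forall v, v \in V -> gconnected (V :\ v) E).

(* components of G - S, for G = (setT, e), as vertex sets *)
Definition compsDel (T : finType) (e : rel T) (S : {set T}) : {set {set T}} :=
  [set [set y | connect (restr (~: S) e) x y] | x in ~: S].

(* G_K with V(K) = S: vertices are the singletons {x}, x in S, and the
   (contracted) components of G - S; two such vertex-blobs are adjacent iff
   they are distinct and some edge of G joins them (multiple edges deleted). *)
Definition GK_vertices (T : finType) (e : rel T) (S : {set T}) : {set {set T}} :=
  [set [set x] | x in S] :|: compsDel e S.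

Definition GK_edges (T : finType) (e : rel T) : rel {set T} :=
  fun A B => (A != B) && [exists x in A, exists y in B, e x y].

(* Main.v *)
Require Import Defs.
From mathcomp Require Import all_boot.
Set Implicit Arguments. Unset Strict Implicit.

Lemma conn_map (T T' : finType) (r : rel T) (r' : rel T') (f : T -> T')
  (A : {set T}) u y :
  (forall a b, a \in A -> r a b -> (b \in A) && connect r' (f a) (f b)) ->
  u \in A -> connect r u y -> connect r' (f u) (f y).
Proof.
move=> H uA /connectP [p pth ->]; elim: p u uA pth => [|z p IH] u uA /=.
  by rewrite connect0.
case/andP=> ruz pz; case/andP: (H _ _ uA ruz) => zA c1.
exact: connect_trans c1 (IH _ zA pz).
Qed.

Lemma exit_edge (T : finType) (r : rel T) (P : pred T) u v :
  connect r u v -> P u -> ~~ P v -> exists a b, [/\ P a, ~~ P b & r a b].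
Proof.
move/connectP=> [p pth ->]; elim: p u pth => [|z p IH] u /=.
  by move=> _ Pu; rewrite Pu.
case/andP=> ruz pz Pu nP.
case Pz: (P z); first exact: IH pz Pz nP.
by exists u, z; rewrite Pz.
Qed.

Lemma restr_sym (T : finType) (A : {set T}) (e : rel T) :
  symmetric e -> symmetric (restr A e).
Proof.
move=> es x y; rewrite /restr es.
by case: (x \in A); case: (y \in A).
Qed.

Lemma restr_last (T : finType) (A : {set T}) e x u :
  x \in A -> connect (restr A e) x u -> u \in A.
Proof.
move=> xA /connectP [p pth ->]; elim: p x xA pth => [|z p IH] x xA //=.
case/andP=> /and3P[_ zA _] pz; exact: IH zA pz.
Qed.

Definition blob (T : finType) (e : rel T) (S : {set T}) (u : T) : {set T} :=
  if u \in S then [set u] else [set y | connect (restr (~: S) e) u y].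

Lemma blob_mem (T : finType) (e : rel T) S u : u \in blob e S u.
Proof.
rewrite /blob; case: ifP => _; first by rewrite set11.
by rewrite inE connect0.
Qed.

Lemma blob_V (T : finType) (e : rel T) S u : blob e S u \in GK_vertices e S.
Proof.
rewrite /blob /GK_vertices /compsDel; case: ifP => uS; rewrite inE; apply/orP.
  by left; apply/imsetP; exists u.
by right; apply/imsetP; exists u; rewrite // inE uS.
Qed.

Lemma V_blob (T : finType) (e : rel T) S X :
  X \in GK_vertices e S -> exists x, X = blob e S x.
Proof.
rewrite inE => /orP [/imsetP [x xS ->] | /imsetP [x xS ->]]; exists x; rewrite /blob.
  by rewrite xS.
by rewrite inE in xS; rewrite (negbTE xS).
Qed.

Lemma V_blob_mem (T : finType) (e : rel T) (e_sym : symmetric e) S X u :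
  X \in GK_vertices e S -> u \in X -> X = blob e S u.
Proof.
move=> /V_blob [x ->]; rewrite /blob; case: ifP => xS.
  by rewrite inE => /eqP ->; rewrite xS.
rewrite inE => cxu.
have uS : u \in ~: S by apply: (restr_last _ cxu); rewrite inE xS.
rewrite inE in uS; rewrite (negbTE uS).
apply/setP => y; rewrite !inE.
apply: same_connect => //.
exact: sym_connect_sym (restr_sym _ e_sym).
Qed.

Lemma main_conn (T : finType) (e : rel T) S (W : {set T}) (D : {set {set T}}) :
  (forall z, z \in W -> blob e S z \in D) -> gconnected W e ->
  (forall X, X \in D -> exists2 u, u \in W & X = blob e S u) ->
  gconnected D (GK_edges e).
Proof.
move=> HWD GW HD X Y XD YD.
case: (HD _ XD) => u uW ->; case: (HD _ YD) => w wW ->.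
apply: (conn_map (A:=W)) _ uW (GW _ _ uW wW).
move=> a b aW /and3P [_ bW eab]; rewrite bW /=.
case: (eqVneq (blob e S a) (blob e S b)) => [->|neq]; first exact: connect0.
apply: connect1.
rewrite /restr !HWD //= /GK_edges neq /=.
apply/existsP; exists a; rewrite blob_mem /=.
by apply/existsP; exists b; rewrite blob_mem.
Qed.

Lemma comp_conn (T : finType) (e : rel T) (e_sym : symmetric e) (S : {set T})
  (eK : rel T)
  (eK_sub : forall x y, eK x y -> [&& x \in S, y \in S & e x y])
  (Gconn : gconnected [set: T] e) (K_conn : gconnected S eK)
  (s0 : T) (s0S : s0 \in S) c :
  c \notin S -> gconnected (~: blob e S c) e.
Proof.
move=> cS.
set C := blob e S c.
have defC : C = [set y | connect (restr (~:S) e) c y] by rewrite /C /blob (negbTE cS).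
have symR A : connect_sym (restr A e) := sym_connect_sym (restr_sym A e_sym).
have CnS z : z \in C -> z \notin S.
  rewrite defC inE => h.
  have cS' : c \in ~: S by rewrite inE.
  by have := restr_last cS' h; rewrite inE.
have close u z : u \in ~: C -> connect (restr (~:S) e) u z -> z \in ~: C.
  move=> uC uz; rewrite inE; apply/negP => zC.
  move: uC; rewrite inE defC inE; move: zC; rewrite defC inE => cz.
  by rewrite (connect_trans cz _) // symR.
have toS u : u \in ~: C -> exists2 s, s \in S & connect (restr (~:C) e) u s.
  move=> uC; case uS: (u \in S); first by exists u => //; rewrite connect0.
  have Pu : (u \notin S) && connect (restr (~:S) e) u u by rewrite uS connect0.
  have Ps0 : ~~ ((s0 \notin S) && connect (restr (~:S) e) u s0) by rewrite s0S.
  have [a [b [Pa nPb eab]]] :=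
    exit_edge (P := fun z => (z \notin S) && connect (restr (~:S) e) u z)
      (Gconn u s0 (in_setT u) (in_setT s0)) Pu Ps0.
    case/andP: Pa => aS ua.
    case/and3P: eab => _ _ eab.
    have bS : b \in S.
      apply/negPn/negP => bS; move: nPb; rewrite bS /=.
      move/negP; apply; apply: (connect_trans ua); apply: connect1.
      by rewrite /restr !inE aS bS.
    exists b => //.
    have aC : a \in ~: C := close _ _ uC ua.
    apply: (connect_trans (y := a)).
      apply: (conn_map (f := id) (A := ~: C) _ uC ua).
      move=> a' b' a'C rab; have b'C : b' \in ~: C.
        by apply: (close _ _ a'C); apply: connect1.
      rewrite b'C /=; apply: connect1; case/and3P: rab => _ _ eab'; rewrite /restr eab' andbT.
      by rewrite a'C b'C.
    apply: connect1; rewrite /restr aC eab andbT inE.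
    by apply/negP => /CnS; rewrite bS.
have Kp s s' : s \in S -> s' \in S -> connect (restr (~:C) e) s s'.
  move=> sS s'S.
  apply: (conn_map (f := id) (A := S) _ sS (K_conn _ _ sS s'S)).
  move=> a b aS /and3P [_ bS /eK_sub /and3P [_ _ eab]].
  rewrite bS /=; apply: connect1; rewrite /restr eab !inE andbT.
  by apply/andP; split; apply/negP => /CnS; rewrite ?aS ?bS.
move=> u w uC wC.
case: (toS _ uC) => s sS us; case: (toS _ wC) => s' s'S ws'.
apply: (connect_trans us); apply: (connect_trans (Kp _ _ sS s'S)).
by rewrite symR.
Qed.

Unset Implicit Arguments.
Theorem lemma4p3 (T : finType) (e : rel T)
  (e_sym : symmetric e) (e_irr : irreflexive e)
  (S : {set T}) (eK : rel T)
  (eK_sub : forall x y, eK x y -> [&& x \in S, y \in S & e x y])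
  (G2 : two_connected [set: T] e)
  (K_conn : gconnected S eK)
  (K3 : 3 <= #|S|) :
  two_connected (GK_vertices e S) (GK_edges e).
Proof.
case: G2 => _ [Gconn Gdel].
have [s0 s0S] : exists s, s \in S.
  have : 0 < #|S| by apply: leq_trans K3.
  by rewrite card_gt0 => /set0Pn.
split.
  have h : #|[set [set x] | x in S]| = #|S| by apply: card_imset; exact: set1_inj.
  apply: (leq_trans K3); rewrite -h; apply: subset_leq_card; exact: subsetUl.
split.
  apply: (main_conn (W := setT)) => //.
    by move=> z _; exact: blob_V.
  by move=> X /V_blob [x ->]; exists x; rewrite ?inE.
move=> v vV; apply: (main_conn (S := S) (W := ~: v)).
- move=> z zv; rewrite in_setD1; apply/andP; split; last exact: blob_V.
    apply/eqP => h; move: zv; by rewrite inE -h blob_mem.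
- case: (V_blob vV) => x ->.
  case xS: (x \in S).
    have -> : blob e S x = [set x] by rewrite /blob xS.
    rewrite -setTD; exact: Gdel x (in_setT x).
  exact: (comp_conn e_sym eK_sub Gconn K_conn s0S (negbT xS)).
- move=> X; rewrite in_setD1 => /andP [Xv XV].
  case: (V_blob XV) => x Xx; exists x => //.
  rewrite inE; apply/negP => xv; move: Xv.
  by rewrite Xx -(V_blob_mem e_sym vV xv) eqxx.
Qed.
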